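(* Let $G=(V,E)$ be a simple undirected graph with $V=[n]$, and let $k\ge 1$ be an integer. Consider the following three optimization problems. (P1) Maximize $\sum_{r\in[k]}\sum_{i\in[n]} Y^{rr}_{ii}$ over $Y\in\mathbb S^{n(k+1)}$, viewed as a $(k+1)\times(k+1)$ array of $n\times n$ blocks $Y^{rl}$ ($r,l\in[k+1]$), subject to: $Y^{rr}_{ij}=0$ for all $\{i,j\}\in E$, $r\in[k]$; $\sum_{r\in[k+1]}Y^{rr}_{ii}=1$ for all $i\in[n]$; $Y^{rl}_{ii}=0$ for all $i\in[n]$ and $r,l\in[k+1]$ with $r\ne l$; $Y\ge 0$ entrywise; and $\begin{bmatrix}1&\mathrm{diag}(Y)^{\top}\\ \mathrm{diag}(Y)&Y\end{bmatrix}\succeq 0$. (P2) Maximize $\sum_{r\in[k]}\sum_{i\in[n]} Y^{rr}_{ii}$ over $Y\in\mathbb S^{nk}$, viewed as a $k\times k$ array of $n\times n$ blocks $Y^{rl}$ ($r,l\in[k]$), subject to: $Y^{rr}_{ij}=0$ for all $\{i,j\}\in E$, $r\in[k]$; $Y^{rl}_{ii}=0$ for all $i\in[n]$, $r\neq l$; $Y\ge0$ entrywise; $\begin{bmatrix}1&\mathrm{diag}(Y)^{\top}\\ \mathrm{diag}(Y)&Y\end{bmatrix}\succeq 0$; and additionally $1-\sum_{r\in[k]}Y^{rr}_{ii}-\sum_{r\in[k]}Y^{rr}_{jj}+\sum_{r\in[k]}\sum_{l\in[k]}Y^{rl}_{ij}\ge 0$ for all $i,j\in[n]$ with $i>j$,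 and $Y^{ll}_{ii}-\sum_{r\in[k]}Y^{rl}_{ij}\ge 0$ for all $i,j\in[n]$ with $i\ne j$ and all $l\in[k]$. (R1) $\theta^1_k(G)=\max \langle I,Z\rangle$ over $Z,X\in\mathbb S^n$ subject to: $Z_{ij}=0$ for $\{i,j\}\in E$; $X_{ii}=0$ for $i\in[n]$; $Z\ge0$, $X\ge 0$ entrywise; $Z-X\succeq 0$; $\begin{bmatrix}1&\mathrm{diag}(Z)^{\top}\\ \mathrm{diag}(Z)&Z+(k-1)X\end{bmatrix}\succeq 0$; $1-Z_{ii}-Z_{jj}+Z_{ij}+(k-1)X_{ij}\ge 0$ for $i,j\in[n]$, $i>j$; and $Z_{ii}-Z_{ij}-(k-1)X_{ij}\ge 0$ for $i,j\in[n]$, $i\ne j$. Then (P1), (P2) and (R1) are equivalent (for each, any feasible solution yields a feasible solution of each of the others with the same objective value; in particular their optimal values coincide), and (R1) is strictly feasible.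
   Context: $\mathbb S^m$ is the space of real symmetric $m\times m$ matrices; $\langle A,B\rangle=\mathrm{trace}(AB)$; $\mathrm{diag}(Y)$ is the vector of diagonal entries of $Y$; $A\ge 0$ means entrywise nonnegativity and $\succeq 0$ (resp. $\succ0$) means positive semidefinite (resp. definite). Strict feasibility of (R1) means there is a feasible point of (R1) at which both matrix inequalities hold with positive definite matrices. *)

(* Defs.v *)
From HB Require Import structures.
From mathcomp Require Import all_boot all_order all_algebra.
From mathcomp Require Import reals.
Set Implicit Arguments. Unset Strict Implicit. Unset Printing Implicit Defensive.
Import Order.TTheory GRing.Theory Num.Theory.
Local Open Scope ring_scope.

Section Defs.
Variable R : realType.

Definition symmetric m (A : 'M[R]_m) : Prop := A^T = A.

Definition psd m (A : 'M[R]_m) : Prop :=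
  symmetric A /\ forall v : 'cV[R]_m, 0 <= (v^T *m A *m v) 0 0.
Definition pd m (A : 'M[R]_m) : Prop :=
  symmetric A /\ forall v : 'cV[R]_m, v != 0 -> 0 < (v^T *m A *m v) 0 0.

Definition nonneg m n (A : 'M[R]_(m, n)) : Prop := forall i j, 0 <= A i j.

Definition diagv m (A : 'M[R]_m) : 'cV[R]_m := \col_i A i i.

Definition bordered m (d : 'cV[R]_m) (M : 'M[R]_m) : 'M[R]_(1 + m) :=
  block_mx (1%:M : 'M[R]_1) d^T d M.

(* block (r,l), entry (i,j) of a matrix viewed as a p x p array of n x n
   blocks: row index r*n+i, column index l*n+j *)
Definition blk p n (Y : 'M[R]_(p * n)) (r l : 'I_p) (i j : 'I_n) : R :=
  Y (mxvec_index r i) (mxvec_index l j).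

Definition simple_graph n (adj : rel 'I_n) : Prop :=
  (forall i j, adj i j = adj j i) /\ (forall i, ~~ adj i i).

Definition feasible_P1 n k (adj : rel 'I_n) (Y : 'M[R]_(k.+1 * n)) : Prop :=
  symmetric Y /\
  (forall (r : 'I_k.+1) i j, (r < k)%N -> adj i j -> blk Y r r i j = 0) /\
  (forall i, \sum_(r < k.+1) blk Y r r i i = 1) /\
  (forall i (r l : 'I_k.+1), r != l -> blk Y r l i i = 0) /\
  nonneg Y /\
  psd (bordered (diagv Y) Y).

Definition obj_P1 n k (Y : 'M[R]_(k.+1 * n)) : R :=
  \sum_(r < k.+1 | (r < k)%N) \sum_(i < n) blk Y r r i i.

Definition feasible_P2 n k (adj : rel 'I_n) (Y : 'M[R]_(k * n)) : Prop :=
  symmetric Y /\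
  (forall (r : 'I_k) i j, adj i j -> blk Y r r i j = 0) /\
  (forall i (r l : 'I_k), r != l -> blk Y r l i i = 0) /\
  nonneg Y /\
  psd (bordered (diagv Y) Y) /\
  (forall i j : 'I_n, (j < i)%N ->
     0 <= 1 - \sum_(r < k) blk Y r r i i - \sum_(r < k) blk Y r r j j
          + \sum_(r < k) \sum_(l < k) blk Y r l i j) /\
  (forall (i j : 'I_n) (l : 'I_k), i != j ->
     0 <= blk Y l l i i - \sum_(r < k) blk Y r l i j).

Definition obj_P2 n k (Y : 'M[R]_(k * n)) : R :=
  \sum_(r < k) \sum_(i < n) blk Y r r i i.

Definition feasible_R1 n k (adj : rel 'I_n) (Z X : 'M[R]_n) : Prop :=
  symmetric Z /\ symmetric X /\
  (forall i j, adj i j -> Z i j = 0) /\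
  (forall i, X i i = 0) /\
  nonneg Z /\ nonneg X /\
  psd (Z - X) /\
  psd (bordered (diagv Z) (Z + (k%:R - 1) *: X)) /\
  (forall i j : 'I_n, (j < i)%N ->
     0 <= 1 - Z i i - Z j j + Z i j + (k%:R - 1) * X i j) /\
  (forall i j : 'I_n, i != j ->
     0 <= Z i i - Z i j - (k%:R - 1) * X i j).

Definition obj_R1 n (Z : 'M[R]_n) : R := \tr (1%:M *m Z).

Definition strictly_feasible_R1 n k (adj : rel 'I_n) : Prop :=
  exists Z X : 'M[R]_n,
    [/\ feasible_R1 k adj Z X, pd (Z - X) &
        pd (bordered (diagv Z) (Z + (k%:R - 1) *: X))].

End Defs.

(* Main.v *)
Require Import Defs.
From HB Require Import structures.
From mathcomp Require Import all_boot all_order all_algebra.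
From mathcomp Require Import reals.
From mathcomp Require Import ring lra zify.
Set Implicit Arguments. Unset Strict Implicit. Unset Printing Implicit Defensive.
Import Order.TTheory GRing.Theory Num.Theory.
Local Open Scope ring_scope.

Section Aux.
Variable R : realType.

Definition bf m (M : 'I_m -> 'I_m -> R) (f g : 'I_m -> R) : R :=
  \sum_i \sum_j f i * M i j * g j.
Definition qf m (M : 'I_m -> 'I_m -> R) (f : 'I_m -> R) : R := bf M f f.

Lemma mx_qf m (A : 'M[R]_m) (v : 'cV[R]_m) :
  (v^T *m A *m v) 0 0 = qf A (fun i => v i 0).
Proof.
rewrite /qf /bf mxE exchange_big /=; apply: eq_bigr => j _.
rewrite mxE big_distrl /=; apply: eq_bigr => i _.
by rewrite !mxE.
Qed.

Lemma qf_ext m (M : 'I_m -> 'I_m -> R) f g :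
  (forall i, f i = g i) -> qf M f = qf M g.
Proof.
by move=> e; apply: eq_bigr => i _; apply: eq_bigr => j _; rewrite !e.
Qed.

Lemma qf_extM m (M N : 'I_m -> 'I_m -> R) f :
  (forall i j, M i j = N i j) -> qf M f = qf N f.
Proof.
by move=> e; apply: eq_bigr => i _; apply: eq_bigr => j _; rewrite !e.
Qed.

Lemma psd_qf m (A : 'M[R]_m) :
  psd A <-> Defs.symmetric A /\ forall f, 0 <= qf A f.
Proof.
split=> [[sA H]|[sA H]].
  split=> // f.
  have := H (\col_i f i); rewrite mx_qf.
  by rewrite (qf_ext _ (g := f)) // => i; rewrite mxE.
by split=> // v; rewrite mx_qf.
Qed.

Lemma pd_qf m (A : 'M[R]_m) :
  Defs.symmetric A -> (forall f, (exists i, f i != 0) -> 0 < qf A f) -> pd A.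
Proof.
move=> sA H; split=> // v nz; rewrite mx_qf; apply: H.
apply/existsP; apply: contraNT nz; rewrite negb_exists => /forallP H0.
apply/eqP/matrixP => i j; rewrite ord1 mxE; exact/eqP/negbNE/H0.
Qed.


Lemma qf_bord m (d : 'cV[R]_m) (A : 'M[R]_m) f :
  qf (bordered d A) f =
  f (lshift m (ord0 : 'I_1)) * f (lshift m (ord0 : 'I_1))
  + 2 * f (lshift m (ord0 : 'I_1)) * (\sum_i d i 0 * f (rshift 1 i))
  + qf A (fun i => f (rshift 1 i)).
Proof.
rewrite /qf /bf /bordered big_split_ord /= big_ord1 !big_split_ord /= !big_ord1.
rewrite block_mxEul mxE eqxx mulr1n.
under eq_bigr do rewrite block_mxEur mxE.
under [X in _ + X = _]eq_bigr => i _.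
  rewrite big_split_ord big_ord1 /= block_mxEdl.
  under eq_bigr do rewrite block_mxEdr.
  over.
rewrite big_split /= mulr1 -!addrA; congr (_ + _).
rewrite addrA; congr (_ + _).
rewrite -big_split /= mulr_sumr -mulr_sumr mulr_sumr; apply: eq_bigr => i _.
ring.
Qed.

Lemma split_l m n (i : 'I_m) : split (lshift n i) = inl i.
Proof. exact: (unsplitK (inl _ i)). Qed.
Lemma split_r m n (i : 'I_n) : split (rshift m i) = inr i.
Proof. exact: (unsplitK (inr _ i)). Qed.

Definition ext m (t : R) (u : 'I_m -> R) : 'I_(1 + m) -> R :=
  fun a => match split a with inl _ => t | inr i => u i end.

Definition BQ m (d : 'cV[R]_m) (A : 'I_m -> 'I_m -> R) t u :=
  t * t + 2 * t * (\sum_i d i 0 * u i) + qf A u.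

Lemma qf_bord_ext m (d : 'cV[R]_m) (A : 'M[R]_m) t u :
  qf (bordered d A) (ext t u) = BQ d A t u.
Proof.
rewrite qf_bord /ext split_l /BQ; congr (_ + _ * _ + _).
  by apply: eq_bigr => i _; rewrite split_r.
by apply: qf_ext => i; rewrite split_r.
Qed.

Lemma sym_bord m (d : 'cV[R]_m) (A : 'M[R]_m) :
  Defs.symmetric A -> Defs.symmetric (bordered d A).
Proof. by move=> sA; rewrite /Defs.symmetric /bordered tr_block_mx tr_scalar_mx trmxK sA. Qed.

Lemma psd_bord m (d : 'cV[R]_m) (A : 'M[R]_m) :
  Defs.symmetric A ->
  psd (bordered d A) <-> forall t u, 0 <= BQ d A t u.
Proof.
move=> sA; rewrite psd_qf; split=> [[_ H] t u|H]; first by rewrite -qf_bord_ext.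
by split; [exact: sym_bord | move=> f; rewrite qf_bord; apply: H].
Qed.


Section BF.
Variable m : nat.
Implicit Types (M : 'I_m -> 'I_m -> R) (f g h : 'I_m -> R).

Lemma bf_linl M a b f g h :
  bf M (fun i => a * f i + b * g i) h = a * bf M f h + b * bf M g h.
Proof.
rewrite /bf !mulr_sumr -big_split; apply: eq_bigr => i _.
rewrite !mulr_sumr -big_split; apply: eq_bigr => j _ /=; ring.
Qed.

Lemma bf_linr M a b f g h :
  bf M h (fun i => a * f i + b * g i) = a * bf M h f + b * bf M h g.
Proof.
rewrite /bf !mulr_sumr -big_split; apply: eq_bigr => i _.
rewrite !mulr_sumr -big_split; apply: eq_bigr => j _ /=; ring.
Qed.

Lemma bf_sym M f g : (forall i j, M i j = M j i) -> bf M f g = bf M g f.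
Proof.
move=> sM; rewrite /bf exchange_big; apply: eq_bigr => i _; apply: eq_bigr => j _.
rewrite sM; ring.
Qed.

Lemma bf_suml (I : finType) M (F : I -> 'I_m -> R) h :
  bf M (fun i => \sum_r F r i) h = \sum_r bf M (F r) h.
Proof.
rewrite /bf; under eq_bigr do under eq_bigr do rewrite big_distrl big_distrl.
under eq_bigr do rewrite exchange_big.
rewrite exchange_big /=; apply: eq_bigr => r _; done.
Qed.

Lemma bf_extl M f f' g : (forall i, f i = f' i) -> bf M f g = bf M f' g.
Proof. by move=> e; apply: eq_bigr => i _; rewrite e. Qed.
Lemma bf_extr M f g g' : (forall i, g i = g' i) -> bf M f g = bf M f g'.
Proof. by move=> e; apply: eq_bigr => i _; apply: eq_bigr => j _; rewrite e. Qed.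

Lemma bf_linM (A B : 'I_m -> 'I_m -> R) a b f g :
  bf (fun i j => a * A i j + b * B i j) f g = a * bf A f g + b * bf B f g.
Proof.
rewrite /bf !mulr_sumr -big_split; apply: eq_bigr => i _.
rewrite !mulr_sumr -big_split; apply: eq_bigr => j _ /=; ring.
Qed.

Lemma bf_sumr (I : finType) M f (F : I -> 'I_m -> R) :
  bf M f (fun j => \sum_r F r j) = \sum_r bf M f (F r).
Proof.
rewrite /bf; symmetry; rewrite exchange_big /=; apply: eq_bigr => i _.
rewrite exchange_big /=; apply: eq_bigr => j _.
by rewrite mulr_sumr.
Qed.

Lemma bf_scall M c f g : bf M (fun i => c * f i) g = c * bf M f g.
Proof.
rewrite /bf mulr_sumr; apply: eq_bigr => i _; rewrite mulr_sumr.
by apply: eq_bigr => j _; ring.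
Qed.

Lemma sum_ind (F : 'I_m -> R) a : \sum_b F b * (b == a)%:R = F a.
Proof.
rewrite (bigD1 a) //= eqxx mulr1 big1 ?addr0 // => b /negbTE ->; by rewrite mulr0.
Qed.

Lemma sum_ind' (F : 'I_m -> R) a : \sum_b (b == a)%:R * F b = F a.
Proof. by rewrite -[RHS](sum_ind F a); apply: eq_bigr => b _; rewrite mulrC. Qed.

Lemma psd_kernel M f : (forall i j, M i j = M j i) -> (forall g, 0 <= qf M g) ->
  qf M f = 0 -> forall a, \sum_b M a b * f b = 0.
Proof.
move=> sM P f0 a.
pose e := fun b : 'I_m => (b == a)%:R : R.
have be : bf M e f = \sum_b M a b * f b.
  rewrite /bf (eq_bigr (fun i => e i * \sum_j M i j * f j)).
    by rewrite /e sum_ind'.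
  by move=> i _; rewrite mulr_sumr; apply: eq_bigr => j _; rewrite mulrA.
set c := \sum_b _ in be *.
have qe : qf M e = M a a.
  rewrite /qf /bf (eq_bigr (fun i => e i * \sum_j M i j * e j)).
    by rewrite /e sum_ind' sum_ind.
  by move=> i _; rewrite mulr_sumr; apply: eq_bigr => j _; rewrite mulrA.
have q0 : 0 <= M a a by rewrite -qe.
have key s : 0 <= 2 * s * c + s ^+ 2 * M a a.
  have := P (fun i => 1 * f i + s * e i).
  rewrite /qf bf_linl !bf_linr -/(qf M f) f0 -/(qf M e) qe (bf_sym f e sM) be.
  move=> H; nra.
set w := (M a a + 1)^-1.
have w1 : w * (M a a + 1) = 1 by rewrite mulVf // gt_eqF // ltr_pwDr.
have w0 : 0 < w by rewrite invr_gt0 ltr_pwDr.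
have := key (- c * w).
have -> : (- c * w) ^+ 2 * M a a = c * c * w * (w * M a a) by ring.
have -> : w * M a a = 1 - w by rewrite -w1; ring.
move=> H.
have : c * c * w * (1 + w) <= 0 by nra.
move=> H2.
have : c * c <= 0.
  rewrite -(pmulr_rle0 _ (mulr_gt0 w0 (ltr_pwDl ltr01 (ltW w0)))).
  by have -> : w * (1 + w) * (c * c) = c * c * w * (1 + w) by ring.
move=> H3; apply/eqP; rewrite -sqrf_eq0 eq_le sqr_ge0 andbT expr2 //.
Qed.
End BF.

Section Blk.
Variables p n : nat.

Definition pr (a : 'I_(p * n)) : 'I_p * 'I_n :=
  enum_val (cast_ord (esym (mxvec_cast p n)) a).

Lemma pr_idx r i : pr (mxvec_index r i) = (r, i).
Proof. by rewrite /pr /mxvec_index cast_ordK enum_rankK. Qed.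

Lemma idx_pr a : mxvec_index (pr a).1 (pr a).2 = a.
Proof. by case/mxvec_indexP: a => r i; rewrite pr_idx. Qed.

Lemma sum_idx (F : 'I_(p * n) -> R) :
  \sum_a F a = \sum_r \sum_i F (mxvec_index r i).
Proof.
rewrite (reindex _ (curry_mxvec_bij _ _)) /= pair_bigA /=.
by apply: eq_bigr => -[r i].
Qed.

Definition mkY (F : 'I_p -> 'I_p -> 'I_n -> 'I_n -> R) : 'M[R]_(p * n) :=
  \matrix_(a, b) F (pr a).1 (pr b).1 (pr a).2 (pr b).2.

Lemma blk_mkY F r l i j : blk (mkY F) r l i j = F r l i j.
Proof. by rewrite /blk /mkY mxE !pr_idx. Qed.

Definition BQb (Y : 'M[R]_(p * n)) t (H : 'I_p -> 'I_n -> R) :=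
  t * t + 2 * t * (\sum_r \sum_i blk Y r r i i * H r i)
  + \sum_r \sum_l \sum_i \sum_j H r i * blk Y r l i j * H l j.

Lemma BQ_blk (Y : 'M[R]_(p * n)) t g :
  BQ (diagv Y) Y t g = BQb Y t (fun r i => g (mxvec_index r i)).
Proof.
rewrite /BQ /BQb sum_idx; congr (_ + _ * _ + _).
  by apply: eq_bigr => r _; apply: eq_bigr => i _; rewrite mxE.
rewrite /qf /bf sum_idx; apply: eq_bigr => r _.
under eq_bigr do rewrite sum_idx.
rewrite exchange_big /=; apply: eq_bigr => l _.
by rewrite exchange_big.
Qed.

Lemma BQb_ext Y t H H' : (forall r i, H r i = H' r i) -> BQb Y t H = BQb Y t H'.
Proof.
move=> e; rewrite /BQb; congr (_ + _ * _ + _).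
  by apply: eq_bigr => r _; apply: eq_bigr => i _; rewrite e.
do 4! (apply: eq_bigr => ? _); by rewrite !e.
Qed.

Lemma psd_blk (Y : 'M[R]_(p * n)) : Defs.symmetric Y ->
  psd (bordered (diagv Y) Y) <-> forall t H, 0 <= BQb Y t H.
Proof.
move=> sY; rewrite psd_bord //; split=> [P t H|P t g]; last by rewrite BQ_blk.
have := P t (fun a => H (pr a).1 (pr a).2); rewrite BQ_blk.
by rewrite (BQb_ext _ _ (H' := H)) // => r i; rewrite pr_idx.
Qed.

Lemma blk_sym (Y : 'M[R]_(p * n)) r l i j :
  Defs.symmetric Y -> blk Y r l i j = blk Y l r j i.
Proof. by move=> sY; rewrite /blk -{1}sY mxE. Qed.

Lemma sym_mkY F : (forall r l i j, F r l i j = F l r j i) -> Defs.symmetric (mkY F).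
Proof.
move=> e; apply/matrixP => a b; rewrite !mxE; exact: e.
Qed.

End Blk.


Lemma symE m (A : 'M[R]_m) : Defs.symmetric A -> forall i j, A i j = A j i.
Proof. by move=> sA i j; rewrite -{1}sA mxE. Qed.

Lemma sum_diag p n (Y : 'M[R]_(p * n)) i :
  (forall i (r l : 'I_p), r != l -> blk Y r l i i = 0) ->
  \sum_r \sum_l blk Y r l i i = \sum_r blk Y r r i i.
Proof.
move=> od; apply: eq_bigr => r _; rewrite (bigD1 r) //= big1 ?addr0 //.
by move=> l nl; apply: od; rewrite eq_sym.
Qed.

Lemma BQb_ind p n (Y : 'M[R]_(p * n)) t j :
  BQb Y t (fun r i => (i == j)%:R) =
  t * t + 2 * t * (\sum_r blk Y r r j j) + \sum_r \sum_l blk Y r l j j.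
Proof.
rewrite /BQb; congr (_ + _ * _ + _).
  by apply: eq_bigr => r _; rewrite sum_ind.
apply: eq_bigr => r _; apply: eq_bigr => l _.
rewrite (eq_bigr (fun i => (i == j)%:R * \sum_j' blk Y r l i j' * (j' == j)%:R)).
  by rewrite sum_ind' sum_ind.
by move=> i _; rewrite mulr_sumr; apply: eq_bigr => j' _; rewrite mulrA.
Qed.

Lemma blk_kernel p n (Y : 'M[R]_(p * n)) j :
  Defs.symmetric Y -> psd (bordered (diagv Y) Y) ->
  (forall i, \sum_r blk Y r r i i = 1) ->
  (forall i (r l : 'I_p), r != l -> blk Y r l i i = 0) ->
  forall l i, \sum_r blk Y l r i j = blk Y l l i i.
Proof.
move=> sY P d1 od l i.
have sB := sym_bord (diagv Y) sY.
have [_ Pq] := (psd_qf _).1 P.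
pose g := fun a : 'I_(p * n) => (((pr a).2 == j)%:R : R).
have q0 : qf (bordered (diagv Y) Y) (ext (-1) g) = 0.
  rewrite qf_bord_ext BQ_blk (BQb_ext _ _ (H' := fun r i => (i == j)%:R)).
    by rewrite BQb_ind sum_diag // d1; ring.
  by move=> r i'; rewrite /g pr_idx.
have := psd_kernel (symE sB) Pq q0 (rshift 1 (mxvec_index l i)).
rewrite big_split_ord big_ord1 /= /bordered block_mxEdl /ext split_l mxE.
under eq_bigr do rewrite block_mxEdr split_r.
rewrite sum_idx.
move=> H; rewrite (eq_bigr (fun r => blk Y l r i j)) in H; last first.
  move=> r _; transitivity (\sum_i0 Y (mxvec_index l i) (mxvec_index r i0) * (i0 == j)%:R).
    by apply: eq_bigr => i0 _; rewrite /g pr_idx.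
  exact: sum_ind.
move/eqP: H; rewrite addrC addr_eq0 => /eqP ->; rewrite mulrN1 opprK /blk //.
Qed.


Lemma sum_recr k (F : 'I_k.+1 -> R) :
  \sum_r F r = \sum_(r < k) F (lift ord_max r) + F ord_max.
Proof.
rewrite big_ord_recr /=; congr (_ + _); apply: eq_bigr => r _; congr F.
by apply: val_inj; rewrite /= /bump leqNgt ltn_ord.
Qed.

Lemma swap4 (I J K L : finType) (F : I -> J -> K -> L -> R) :
  \sum_i \sum_j \sum_r \sum_l F i j r l = \sum_r \sum_l \sum_i \sum_j F i j r l.
Proof.
under eq_bigr do rewrite exchange_big.
under eq_bigr do under eq_bigr do rewrite exchange_big.
rewrite exchange_big; apply: eq_bigr => r _; by rewrite exchange_big.
Qed.

Lemma sum_constk k (c : R) : \sum_(r < k) c = k%:R * c.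
Proof. by rewrite sumr_const card_ord mulr_natl. Qed.

Lemma sum_if k (r : 'I_k) (a b : R) :
  \sum_(l < k) (if r == l then a else b) = a + (k%:R - 1) * b.
Proof.
rewrite (bigD1 r) //= eqxx; congr (_ + _).
rewrite (eq_bigr (fun _ => b)); last by move=> l /negbTE; rewrite eq_sym => ->.
rewrite sumr_const mulrC -[b *+ _]mulr_natr; congr (b * _).
have := cardC1 r; rewrite card_ord => ->.
by case: k r => [[]|k r] //=; rewrite mulrSr addrK.
Qed.

End Aux.

Section P.
Variables (R : realType) (k n : nat) (adj : rel 'I_n).
Hypothesis k1 : (1 <= k)%N.

Definition WP2 (Y : 'M[R]_(k * n)) : Prop :=
  Defs.symmetric Y /\ (forall r i j, adj i j -> blk Y r r i j = 0) /\
  (forall i (r l : 'I_k), r != l -> blk Y r l i i = 0) /\ nonneg Y /\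
  psd (bordered (diagv Y) Y) /\
  (forall i j : 'I_n, (j < i)%N ->
     0 <= 1 - \sum_(r < k) blk Y r r i i - \sum_(r < k) blk Y r r j j
          + \sum_(r < k) \sum_(l < k) blk Y r l i j) /\
  (forall i j : 'I_n, i != j ->
     0 <= \sum_(l < k) blk Y l l i i - \sum_(r < k) \sum_(l < k) blk Y r l i j).

Definition Zof (Y : 'M[R]_(k * n)) : 'M[R]_n := \matrix_(i, j) \sum_r blk Y r r i j.
Definition Tof (Y : 'M[R]_(k * n)) i j := \sum_r \sum_l blk Y r l i j.
Definition Xof (Y : 'M[R]_(k * n)) : 'M[R]_n :=
  \matrix_(i, j) ((k%:R - 1)^-1 * (Tof Y i j - Zof Y i j)).

Lemma TZ_off (Y : 'M[R]_(k * n)) i j :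
  Tof Y i j - Zof Y i j = \sum_r \sum_(l | l != r) blk Y r l i j.
Proof.
rewrite /Tof mxE -sumrB; apply: eq_bigr => r _.
by rewrite (bigD1 r) //= addrC addrK.
Qed.

Lemma kX (Y : 'M[R]_(k * n)) i j :
  (k%:R - 1) * Xof Y i j = Tof Y i j - Zof Y i j.
Proof.
rewrite mxE mulrA; have [e|ne] := eqVneq (k%:R - 1 : R) 0; last by rewrite mulfV ?mul1r.
have ek : k = 1%N by apply/eqP; rewrite -(eqr_nat R) -subr_eq0 e.
rewrite e !mul0r TZ_off; symmetry; apply: big1 => r _; rewrite big_pred0 // => l.
apply/negbTE/negPn/eqP/val_inj.
have hl : (val l < 1)%N by rewrite -[X in (_ < X)%N]ek ltn_ord.
have hr : (val r < 1)%N by rewrite -[X in (_ < X)%N]ek ltn_ord.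
by move: hl hr; rewrite !ltnS !leqn0 => /eqP -> /eqP ->.
Qed.

Lemma ZX_T (Y : 'M[R]_(k * n)) i j :
  Zof Y i j + (k%:R - 1) * Xof Y i j = Tof Y i j.
Proof. by rewrite kX addrC subrK. Qed.


Lemma qf_lin2 m (A B : 'I_m -> 'I_m -> R) a b f :
  qf (fun i j => a * A i j + b * B i j) f = a * qf A f + b * qf B f.
Proof.
rewrite /qf /bf !mulr_sumr -big_split; apply: eq_bigr => i _.
rewrite !mulr_sumr -big_split; apply: eq_bigr => j _ /=; ring.
Qed.

Definition qb (Y : 'M[R]_(k * n)) (u : 'I_n -> R) r l :=
  \sum_i \sum_j u i * blk Y r l i j * u j.

Lemma BQb_tensor (Y : 'M[R]_(k * n)) a u :
  BQb Y 0 (fun r i => a r * u i) = \sum_r \sum_l a r * a l * qb Y u r l.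
Proof.
rewrite /BQb !(mulr0, mul0r, add0r); apply: eq_bigr => r _; apply: eq_bigr => l _.
rewrite /qb mulr_sumr; apply: eq_bigr => i _; rewrite mulr_sumr.
by apply: eq_bigr => j _ /=; ring.
Qed.

Lemma qf_Z (Y : 'M[R]_(k * n)) u : qf (Zof Y) u = \sum_r qb Y u r r.
Proof.
rewrite /qf /bf /qb.
under eq_bigr do under eq_bigr do rewrite mxE mulr_sumr big_distrl.
under eq_bigr do rewrite exchange_big.
by rewrite exchange_big.
Qed.

Lemma qf_T (Y : 'M[R]_(k * n)) u : qf (Tof Y) u = \sum_r \sum_l qb Y u r l.
Proof.
rewrite /qf /bf /qb /Tof.
rewrite -swap4; apply: eq_bigr => i _; apply: eq_bigr => j _.
rewrite mulr_sumr big_distrl; apply: eq_bigr => r _ /=.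
by rewrite mulr_sumr big_distrl.
Qed.

Lemma dd (F : 'I_k -> 'I_k -> R) x y :
  \sum_r \sum_l (r == x)%:R * (l == y)%:R * F r l = F x y.
Proof.
rewrite (eq_bigr (fun r => (r == x)%:R * F r y)); first by rewrite sum_ind'.
move=> r _; rewrite -[RHS](sum_ind' (fun l => (r == x)%:R * F r l) y).
by apply: eq_bigr => l _; ring.
Qed.

Lemma pair_qb (Y : 'M[R]_(k * n)) u s s' :
  \sum_r \sum_l ((r == s)%:R - (r == s')%:R) * ((l == s)%:R - (l == s')%:R) * qb Y u r l
  = qb Y u s s - qb Y u s s' - qb Y u s' s + qb Y u s' s'.
Proof.
rewrite -(dd (qb Y u) s s) -(dd (qb Y u) s s') -(dd (qb Y u) s' s) -(dd (qb Y u) s' s').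
rewrite -!sumrB -!big_split; apply: eq_bigr => r _.
rewrite -!sumrB -!big_split; apply: eq_bigr => l _ /=; ring.
Qed.

Lemma jensen_blk (Y : 'M[R]_(k * n)) u :
  psd (bordered (diagv Y) Y) -> Defs.symmetric Y ->
  \sum_r \sum_l qb Y u r l <= k%:R * \sum_r qb Y u r r.
Proof.
move=> P sY; have P' := (psd_blk sY).1 P.
have H : 0 <= \sum_(s < k) \sum_(s' < k)
   (qb Y u s s - qb Y u s s' - qb Y u s' s + qb Y u s' s').
  apply: sumr_ge0 => s _; apply: sumr_ge0 => s' _; rewrite -pair_qb -BQb_tensor; exact: P'.
have E : \sum_(s < k) \sum_(s' < k)
   (qb Y u s s - qb Y u s s' - qb Y u s' s + qb Y u s' s') =
   2 * (k%:R * \sum_r qb Y u r r - \sum_r \sum_l qb Y u r l).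
  under eq_bigr do rewrite !big_split /= !sumrN sum_constk.
  rewrite !big_split /= !sumrN -mulr_sumr sum_constk.
  rewrite [\sum_(i < k) \sum_(i0 < k) qb Y u i0 i]exchange_big /=; ring.
move: H; rewrite E pmulr_rge0 // subr_ge0 //.
Qed.


Lemma Tof_sym (Y : 'M[R]_(k * n)) i j : Defs.symmetric Y -> Tof Y i j = Tof Y j i.
Proof.
move=> sY; rewrite /Tof exchange_big; apply: eq_bigr => r _; apply: eq_bigr => l _.
exact: blk_sym.
Qed.

Lemma Zof_sym (Y : 'M[R]_(k * n)) : Defs.symmetric Y -> Defs.symmetric (Zof Y).
Proof.
move=> sY; apply/matrixP => i j; rewrite !mxE; apply: eq_bigr => r _; exact: blk_sym.
Qed.

Lemma Xof_sym (Y : 'M[R]_(k * n)) : Defs.symmetric Y -> Defs.symmetric (Xof Y).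
Proof.
move=> sY; apply/matrixP => i j; rewrite !mxE Tof_sym //.
by congr (_ * (_ - _)); apply: eq_bigr => r _; apply: blk_sym.
Qed.

Lemma sym_lin m (A B : 'M[R]_m) a b : Defs.symmetric A -> Defs.symmetric B ->
  Defs.symmetric (a *: A + b *: B).
Proof.
move=> sA sB; apply/matrixP => i j; rewrite !mxE (symE sA) (symE sB) //.
Qed.

Lemma mxsubE m (A B : 'M[R]_m) i j : (A - B) i j = A i j - B i j.
Proof. by rewrite !mxE. Qed.
Lemma mxlinE m (A B : 'M[R]_m) c i j : (A + c *: B) i j = A i j + c * B i j.
Proof. by rewrite !mxE. Qed.

Lemma km1_ge0 : 0 <= (k%:R - 1 : R).
Proof. by rewrite subr_ge0 ler1n. Qed.

Lemma WP2_R1 (Y : 'M[R]_(k * n)) : WP2 Y ->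
  feasible_R1 k adj (Zof Y) (Xof Y) /\ obj_R1 (Zof Y) = obj_P2 Y.
Proof.
move=> [sY [hadj [od [nY [P [ca cb]]]]]].
have sZ := Zof_sym sY; have sX := Xof_sym sY.
have Zd i : Zof Y i i = \sum_r blk Y r r i i by rewrite mxE.
split; last first.
  rewrite /obj_R1 /obj_P2 mul1mx /mxtrace exchange_big /=.
  by apply: eq_bigr => i _; rewrite mxE.
split; first exact: sZ. split; first exact: sX.
split. by move=> i j aij; rewrite mxE big1 // => r _; apply: hadj.
split. by move=> i; rewrite mxE /Tof sum_diag // -Zd subrr mulr0.
split. by move=> i j; rewrite mxE; apply: sumr_ge0 => r _; apply: nY.
split. move=> i j; rewrite mxE TZ_off; apply: mulr_ge0; first by rewrite invr_ge0 km1_ge0.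
  by apply: sumr_ge0 => r _; apply: sumr_ge0 => l _; apply: nY.
split.
  apply/psd_qf; split.
    have := sym_lin 1 (-1) sZ sX; by rewrite scale1r scaleN1r.
  move=> u.
  have [e|ne] := eqVneq (k%:R - 1 : R) 0.
    have X0 i j : Xof Y i j = 0 by rewrite mxE e invr0 mul0r.
    have ZT i j : Zof Y i j = Tof Y i j by rewrite -ZX_T X0 mulr0 addr0.
    rewrite (qf_extM (N := fun i j => Tof Y i j)); last by move=> i j; rewrite mxsubE X0 subr0 ZT.
    rewrite qf_T; have := (psd_blk sY).1 P 0 (fun r i => 1 * u i).
    by rewrite BQb_tensor; under eq_bigr do under eq_bigr do rewrite !mul1r.
  have kp : 0 < (k%:R - 1 : R) by rewrite lt_def ne km1_ge0.
  rewrite (qf_extM (N := fun i j => ((k%:R - 1)^-1 * k%:R) * Zof Y i j + (- (k%:R - 1)^-1) * Tof Y i j)); last first.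
    move=> i j; rewrite mxsubE -ZX_T; field; by rewrite ne.
  rewrite qf_lin2 qf_T qf_Z mulNr -mulrA -mulrBr; apply: mulr_ge0; first by rewrite invr_ge0 ltW.
  by rewrite subr_ge0 jensen_blk.
split.
  apply/psd_bord.
    have := sym_lin 1 (k%:R - 1) sZ sX; by rewrite scale1r.
  move=> t u; have := (psd_blk sY).1 P t (fun r i => u i).
  suff -> : BQ (diagv (Zof Y)) (Zof Y + (k%:R - 1) *: Xof Y) t u = BQb Y t (fun _ i => u i) by [].
  rewrite /BQ /BQb; congr (_ + _ * _ + _).
    rewrite exchange_big /=; apply: eq_bigr => i _; by rewrite !mxE big_distrl.
  rewrite -swap4 /qf /bf; apply: eq_bigr => i _; apply: eq_bigr => j _.
  rewrite mxlinE ZX_T /Tof mulr_sumr big_distrl; apply: eq_bigr => r _ /=.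
  by rewrite mulr_sumr big_distrl.
split.
  move=> i j ji; rewrite (Zd i) (Zd j) -addrA ZX_T; exact: ca.
move=> i j nij; rewrite Zd -addrA -opprD ZX_T; exact: cb.
Qed.


Lemma P2_WP2 (Y : 'M[R]_(k * n)) : feasible_P2 adj Y -> WP2 Y.
Proof.
move=> [sY [ha [od [nY [P [ca cb]]]]]].
do 6! (split => //).
move=> i j nij; rewrite exchange_big /= -sumrB; apply: sumr_ge0 => l _; exact: cb.
Qed.

Definition trunc (Y : 'M[R]_(k.+1 * n)) : 'M[R]_(k * n) :=
  mkY (fun r l i j => blk Y (lift ord_max r) (lift ord_max l) i j).

Definition ext1 (H : 'I_k -> 'I_n -> R) (r : 'I_k.+1) i : R :=
  if unlift ord_max r is Some r' then H r' i else 0.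

Lemma ext1_lift H r i : ext1 H (lift ord_max r) i = H r i.
Proof. by rewrite /ext1 liftK. Qed.
Lemma ext1_max H i : ext1 H ord_max i = 0.
Proof. by rewrite /ext1 unlift_none. Qed.

Lemma BQb_trunc (Y : 'M[R]_(k.+1 * n)) t H :
  BQb (trunc Y) t H = BQb Y t (ext1 H).
Proof.
rewrite /BQb; congr (_ + _ * _ + _).
  rewrite sum_recr [X in _ = _ + X]big1 ?addr0; last by move=> i _; rewrite ext1_max mulr0.
  apply: eq_bigr => r _; apply: eq_bigr => i _; by rewrite blk_mkY ext1_lift.
rewrite sum_recr [X in _ = _ + X]big1 ?addr0; last first.
  move=> l _; apply: big1 => i _; apply: big1 => j _; by rewrite ext1_max !mul0r.
apply: eq_bigr => r _; rewrite sum_recr [X in _ = _ + X]big1 ?addr0; last first.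
  move=> i _; apply: big1 => j _; by rewrite ext1_max !mulr0.
apply: eq_bigr => l _; apply: eq_bigr => i _; apply: eq_bigr => j _.
by rewrite blk_mkY !ext1_lift.
Qed.

Lemma P1_WP2 (Y : 'M[R]_(k.+1 * n)) : feasible_P1 adj Y ->
  WP2 (trunc Y) /\ obj_P2 (trunc Y) = obj_P1 Y.
Proof.
move=> [sY [ha [d1 [od [nY P]]]]].
have K j := @blk_kernel R _ _ Y j sY P d1 od.
have sT : Defs.symmetric (trunc Y).
  by apply: sym_mkY => r l i j; apply: blk_sym.
pose m : 'I_k.+1 := ord_max.
have lk (r : 'I_k) : (lift (ord_max : 'I_k.+1) r < k)%N.
  rewrite /= /bump; have h := ltn_ord r; case: leqP => h2; lia.
split; last first.
  rewrite /obj_P2 /obj_P1 [RHS]big_mkcond sum_recr /= ltnn addr0.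
  by apply: eq_bigr => r _; rewrite lk; apply: eq_bigr => i _; rewrite blk_mkY.
split; first exact: sT.
split. by move=> r i j aij; rewrite blk_mkY; apply: ha.
split. move=> i r l nrl; rewrite blk_mkY; apply: od.
  by apply: contra nrl => /eqP/lift_inj ->.
split. by move=> a b; rewrite mxE; apply: nY.
split. apply/(psd_blk sT) => t H; rewrite BQb_trunc; exact: ((psd_blk sY).1 P).
have Kl l i j : \sum_(r < k) blk Y l (lift ord_max r) i j = blk Y l l i i - blk Y l m i j.
  by rewrite -(K j l i) sum_recr addrK.
have S1 x y : \sum_(r < k) blk (trunc Y) r r x y = \sum_(r < k) blk Y (lift m r) (lift m r) x y.
  by apply: eq_bigr => r _; rewrite blk_mkY.
have S2 x y : \sum_(r < k) \sum_(l < k) blk (trunc Y) r l x y =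
     \sum_(r < k) \sum_(l < k) blk Y (lift m r) (lift m l) x y.
  by apply: eq_bigr => r _; apply: eq_bigr => l _; rewrite blk_mkY.
split.
  move=> i j ji; rewrite !S1 S2.
  have d1' : \sum_(r < k) blk Y (lift m r) (lift m r) i i = 1 - blk Y m m i i.
    by rewrite -(d1 i) sum_recr addrK.
  have e2a r : blk Y m (lift m r) i j =
      blk Y (lift m r) (lift m r) j j - \sum_(l < k) blk Y (lift m r) (lift m l) j i.
    by rewrite blk_sym // Kl; ring.
  have TTs : \sum_(r < k) \sum_(l < k) blk Y (lift m r) (lift m l) j i =
             \sum_(r < k) \sum_(l < k) blk Y (lift m r) (lift m l) i j.
    rewrite exchange_big; apply: eq_bigr => r _; apply: eq_bigr => l _ /=.
    exact: blk_sym.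
  have e2 : \sum_(r < k) blk Y m (lift m r) i j =
     \sum_(r < k) blk Y (lift m r) (lift m r) j j
     - \sum_(r < k) \sum_(l < k) blk Y (lift m r) (lift m l) i j.
    by rewrite -TTs -sumrB; apply: eq_bigr => r _; rewrite e2a.
  have Kmm := Kl m i j; rewrite e2 in Kmm.
  have := nY (mxvec_index m i) (mxvec_index m j); rewrite -/(blk Y m m i j).
  rewrite d1'; lra.
move=> i j nij; rewrite S1 S2.
rewrite -sumrB; apply: sumr_ge0 => l _.
rewrite Kl subKr; exact: nY.
Qed.

End P.

Section Q.
Variables (R : realType) (k n : nat) (adj : rel 'I_n).
Hypothesis k1 : (1 <= k)%N.
Variables Z X : 'M[R]_n.
Hypothesis F : feasible_R1 k adj Z X.

Definition Y2 : 'M[R]_(k * n) :=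
  mkY (fun r l i j => (if r == l then Z i j else X i j) / k%:R).

Lemma kn0 : (k%:R : R) != 0.
Proof. by rewrite pnatr_eq0 -lt0n. Qed.
Lemma kgt0 : (0 : R) < k%:R.
Proof. by rewrite ltr0n. Qed.

Lemma Y2_psd t G : 0 <= BQb Y2 t G.
Proof.
have [sZ [sX [ha [X0 [nZ [nX [PD [PB [ca cb]]]]]]]]] := F.
pose D := fun i j => Z i j - X i j.
have sD i j : D i j = D j i by rewrite /D (symE sZ) (symE sX).
have PD' f : 0 <= qf D f.
  have [_ H] := (psd_qf _).1 PD; have := H f.
  by rewrite (qf_extM (N := D)) // => i j; rewrite mxsubE.
pose s := fun i => \sum_r G r i.
pose u := fun i => s i / k%:R.
have T2 : \sum_r \sum_i blk Y2 r r i i * G r i = \sum_i Z i i * u i.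
  rewrite exchange_big /=; apply: eq_bigr => i _.
  rewrite /u /s mulr_suml mulr_sumr; apply: eq_bigr => r _.
  by rewrite blk_mkY eqxx; ring.
have T3 : \sum_r \sum_l \sum_i \sum_j G r i * blk Y2 r l i j * G l j =
   k%:R^-1 * \sum_r qf D (G r) + k%:R^-1 * qf X s.
  have E r l : \sum_i \sum_j G r i * blk Y2 r l i j * G l j =
      ((r == l)%:R * k%:R^-1) * bf D (G r) (G l) + k%:R^-1 * bf X (G r) (G l).
    rewrite -bf_linM; apply: eq_bigr => i _; apply: eq_bigr => j _.
    rewrite blk_mkY /D; case: eqP => _; rewrite /=; ring.
  under eq_bigr do under eq_bigr do rewrite E.
  under eq_bigr do rewrite big_split /=.
  rewrite big_split /=; congr (_ + _).
    rewrite mulr_sumr; apply: eq_bigr => r _.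
    rewrite (bigD1 r) //= eqxx mul1r big1 ?addr0 // => l /negbTE.
    by rewrite eq_sym => ->; rewrite !mul0r.
  rewrite /qf bf_suml mulr_sumr; apply: eq_bigr => r _.
  by rewrite bf_sumr mulr_sumr.
have J : k%:R * qf D u <= \sum_r qf D (G r).
  have Hr r : qf D (fun i => 1 * G r i + (-1) * u i) =
      qf D (G r) - 2 * bf D (G r) u + qf D u.
    rewrite /qf bf_linl !bf_linr (bf_sym (G r) u sD); ring.
  have H0 : 0 <= \sum_r qf D (fun i => 1 * G r i + (-1) * u i).
    by apply: sumr_ge0 => r _; apply: PD'.
  rewrite (eq_bigr _ (fun r _ => Hr r)) in H0.
  rewrite !big_split /= sumrN sum_constk -mulr_sumr in H0.
  have Es : \sum_r bf D (G r) u = k%:R * qf D u.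
    rewrite -bf_suml /qf -bf_scall; apply: bf_extl => i.
    by rewrite /u mulrC -mulrA mulVf ?mulr1 // kn0.
  rewrite Es in H0; lra.
have sZX : Defs.symmetric (Z + (k%:R - 1) *: X).
  by have := sym_lin 1 (k%:R - 1) sZ sX; rewrite scale1r.
have B := (psd_bord (diagv Z) sZX).1 PB t u.
have E1 : \sum_i diagv Z i 0 * u i = \sum_i Z i i * u i.
  by apply: eq_bigr => i _; rewrite mxE.
have E2 : qf (Z + (k%:R - 1) *: X) u = 1 * qf D u + k%:R * qf X u.
  rewrite -qf_lin2; apply: qf_extM => i j; rewrite mxlinE /D; ring.
have E3 : qf X s = k%:R * k%:R * qf X u.
  rewrite (qf_ext _ (g := fun i => k%:R * u i)); last first.
    by move=> i; rewrite /u mulrC -mulrA mulVf ?mulr1 // kn0.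
  rewrite /qf /bf !mulr_sumr; apply: eq_bigr => i _; rewrite !mulr_sumr.
  by apply: eq_bigr => j _; ring.
have J' : qf D u <= k%:R^-1 * \sum_r qf D (G r) by rewrite ler_pdivlMl ?kgt0.
move: B; rewrite /BQ E1 E2 /BQb T2 T3 E3 => B.
have -> : k%:R^-1 * (k%:R * k%:R * qf X u) = k%:R * qf X u.
  by rewrite !mulrA mulVf ?mul1r // kn0.
lra.
Qed.


Lemma sum_if' (l : 'I_k) (a b : R) :
  \sum_(r < k) (if r == l then a else b) = a + (k%:R - 1) * b.
Proof. by rewrite -(sum_if l); apply: eq_bigr => r _; rewrite eq_sym. Qed.

Lemma sym_Y2 : Defs.symmetric Y2.
Proof.
have [sZ [sX _]] := F.
apply: sym_mkY => r l i j; rewrite eq_sym (symE sZ) (symE sX); by case: (l == r).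
Qed.

Lemma R1_P2 : feasible_P2 adj Y2 /\ obj_P2 Y2 = obj_R1 Z.
Proof.
have [sZ [sX [ha [X0 [nZ [nX [PD [PB [ca cb]]]]]]]]] := F.
have kk : k%:R * k%:R^-1 = 1 :> R by rewrite mulfV // kn0.
have D1 x : \sum_(r < k) blk Y2 r r x x = Z x x.
  under eq_bigr do rewrite blk_mkY eqxx.
  by rewrite sum_constk mulrA mulrAC kk mul1r.
have D2 x y l : \sum_(r < k) blk Y2 r l x y = (Z x y + (k%:R - 1) * X x y) / k%:R.
  under eq_bigr do rewrite blk_mkY.
  by rewrite -mulr_suml sum_if'.
have D3 x y r : \sum_(l < k) blk Y2 r l x y = (Z x y + (k%:R - 1) * X x y) / k%:R.
  under eq_bigr do rewrite blk_mkY.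
  by rewrite -mulr_suml sum_if.
split; last first.
  rewrite /obj_P2 /obj_R1 mul1mx /mxtrace exchange_big /=.
  by apply: eq_bigr => i _; rewrite D1.
split; first exact: sym_Y2.
split. by move=> r i j aij; rewrite blk_mkY eqxx ha // mul0r.
split. by move=> i r l nrl; rewrite blk_mkY (negbTE nrl) X0 mul0r.
split. move=> a b; rewrite mxE; apply: divr_ge0; last by rewrite ler0n.
  by case: ifP => _; [apply: nZ | apply: nX].
split. by apply/(psd_blk sym_Y2) => t G; apply: Y2_psd.
split.
  move=> i j ji; rewrite !D1.
  rewrite (eq_bigr (fun r => (Z i j + (k%:R - 1) * X i j) / k%:R)); last first.
    by move=> r _; rewrite D3.
  rewrite sum_constk mulrA mulrAC kk mul1r addrA; exact: ca.
move=> i j l nij; rewrite D2 blk_mkY eqxx -mulrBl; apply: divr_ge0; last by rewrite ler0n.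
by rewrite opprD addrA; apply: cb.
Qed.

End Q.

Section L.
Variables (R : realType) (k n : nat).
Variable Y : 'M[R]_(k * n).
Hypothesis sY : Defs.symmetric Y.
Hypothesis od : forall i (r l : 'I_k), r != l -> blk Y r l i i = 0.

Definition dg r i := blk Y r r i i.
Definition Dd i := \sum_r dg r i.
Definition TT i j := \sum_r \sum_l blk Y r l i j.
Definition VV r i j := dg r i - \sum_l blk Y r l i j.
Definition WW i j := 1 - Dd i - Dd j + TT i j.

Definition FL (r l : 'I_k.+1) (i j : 'I_n) : R :=
  match unlift ord_max r, unlift ord_max l with
  | Some r', Some l' => blk Y r' l' i j
  | Some r', None => VV r' i j
  | None, Some l' => VV l' j i
  | None, None => WW i j
  end.

Definition Y1 : 'M[R]_(k.+1 * n) := mkY FL.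

Lemma FL_ll r l i j : FL (lift ord_max r) (lift ord_max l) i j = blk Y r l i j.
Proof. by rewrite /FL !liftK. Qed.
Lemma FL_lm r i j : FL (lift ord_max r) ord_max i j = VV r i j.
Proof. by rewrite /FL liftK unlift_none. Qed.
Lemma FL_ml l i j : FL ord_max (lift ord_max l) i j = VV l j i.
Proof. by rewrite /FL liftK unlift_none. Qed.
Lemma FL_mm i j : FL ord_max ord_max i j = WW i j.
Proof. by rewrite /FL unlift_none. Qed.

Lemma TT_diag i : TT i i = Dd i.
Proof. by rewrite /TT sum_diag. Qed.

Section Id.
Variables (t : R) (H : 'I_k.+1 -> 'I_n -> R).
Let Hr r i := H (lift ord_max r) i.
Let h i := H ord_max i.
Let sg := \sum_i h i.
Let A := \sum_r \sum_i dg r i * Hr r i.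
Let B := \sum_i Dd i * h i.
Let Q := \sum_r \sum_l \sum_i \sum_j Hr r i * blk Y r l i j * Hr l j.
Let P := \sum_r \sum_l \sum_i \sum_j Hr r i * blk Y r l i j * h j.
Let RR := \sum_r \sum_l \sum_i \sum_j h i * blk Y r l i j * h j.

Lemma sB : \sum_r \sum_i dg r i * h i = B.
Proof.
rewrite exchange_big /=; apply: eq_bigr => i _; by rewrite /Dd big_distrl.
Qed.

Lemma X1 : \sum_r \sum_i \sum_j Hr r i * VV r i j * h j = A * sg - P.
Proof.
rewrite /A /P /sg big_distrl /= -sumrB; apply: eq_bigr => r _.
under eq_bigr do under eq_bigr do rewrite /VV mulrBr mulrBl.
under eq_bigr do rewrite sumrB.
rewrite sumrB big_distrl /=; congr (_ - _).
  apply: eq_bigr => i _; rewrite mulr_sumr; apply: eq_bigr => j _ /=; ring.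
symmetry; rewrite exchange_big /=; apply: eq_bigr => i _.
rewrite exchange_big /=; apply: eq_bigr => j _.
by rewrite mulr_sumr big_distrl; apply: eq_bigr => l _.
Qed.

Lemma X2 : \sum_l \sum_i \sum_j h i * VV l j i * Hr l j = A * sg - P.
Proof.
rewrite -X1; apply: eq_bigr => l _; rewrite exchange_big /=.
by apply: eq_bigr => j _; apply: eq_bigr => i _; ring.
Qed.

Lemma X3 : \sum_i \sum_j h i * WW i j * h j = sg * sg - 2 * B * sg + RR.
Proof.
have e i j : h i * WW i j * h j =
   h i * h j - (Dd i * h i) * h j - h i * (Dd j * h j)
   + \sum_r \sum_l h i * blk Y r l i j * h j.
  have -> : \sum_r \sum_l h i * blk Y r l i j * h j = h i * TT i j * h j.
    rewrite /TT mulr_sumr big_distrl; apply: eq_bigr => r _ /=.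
    by rewrite mulr_sumr big_distrl.
  rewrite /WW; ring.
rewrite (eq_bigr (fun i => \sum_j (h i * h j - (Dd i * h i) * h j - h i * (Dd j * h j)
   + \sum_r \sum_l h i * blk Y r l i j * h j))); last first.
  by move=> i _; apply: eq_bigr => j _; rewrite e.
under eq_bigr do rewrite big_split /= !sumrB.
rewrite big_split /= !sumrB.
have p1 : \sum_i \sum_j h i * h j = sg * sg.
  by rewrite /sg big_distrl /=; apply: eq_bigr => i _; rewrite mulr_sumr.
have p2 : \sum_i \sum_j Dd i * h i * h j = B * sg.
  by rewrite /sg /B big_distrl /=; apply: eq_bigr => i _; rewrite mulr_sumr.
have p3 : \sum_i \sum_j h i * (Dd j * h j) = sg * B.
  by rewrite /sg /B big_distrl /=; apply: eq_bigr => i _; rewrite mulr_sumr.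
have p4 : \sum_i \sum_j \sum_r \sum_l h i * blk Y r l i j * h j = RR.
  by rewrite /RR swap4.
rewrite p1 p2 p3 p4; ring.
Qed.

Lemma L2 : \sum_r \sum_i blk Y1 r r i i * H r i = A + (sg - B).
Proof.
rewrite sum_recr; congr (_ + _).
  by apply: eq_bigr => r _; apply: eq_bigr => i _; rewrite blk_mkY FL_ll.
rewrite /sg /B -sumrB; apply: eq_bigr => i _.
rewrite blk_mkY FL_mm /WW TT_diag /h; ring.
Qed.

Lemma L3 : \sum_r \sum_l \sum_i \sum_j H r i * blk Y1 r l i j * H l j =
  Q + (A * sg - P) + (A * sg - P) + (sg * sg - 2 * B * sg + RR).
Proof.
rewrite sum_recr -{1}X1 -X2 -X3 -!addrA addrA; congr (_ + _).
  rewrite /Q -big_split /=; apply: eq_bigr => r _.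
  rewrite sum_recr; congr (_ + _).
    apply: eq_bigr => l _; apply: eq_bigr => i _; apply: eq_bigr => j _.
    by rewrite blk_mkY FL_ll.
  apply: eq_bigr => i _; apply: eq_bigr => j _.
  by rewrite blk_mkY FL_lm.
rewrite sum_recr; congr (_ + _).
  apply: eq_bigr => l _; apply: eq_bigr => i _; apply: eq_bigr => j _.
  by rewrite blk_mkY FL_ml.
apply: eq_bigr => i _; apply: eq_bigr => j _.
by rewrite blk_mkY FL_mm.
Qed.

Lemma R2 : \sum_r \sum_i blk Y r r i i * (Hr r i - h i) = A - B.
Proof.
rewrite -sB /A -sumrB; apply: eq_bigr => r _; rewrite -sumrB.
by apply: eq_bigr => i _; rewrite /dg mulrBr.
Qed.

Lemma Psym : \sum_r \sum_l \sum_i \sum_j h i * blk Y r l i j * Hr l j = P.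
Proof.
rewrite /P exchange_big /=; apply: eq_bigr => l _; apply: eq_bigr => r _.
rewrite exchange_big /=; apply: eq_bigr => j _; apply: eq_bigr => i _.
by rewrite (blk_sym _ _ _ _ sY); ring.
Qed.

Lemma R3 : \sum_r \sum_l \sum_i \sum_j (Hr r i - h i) * blk Y r l i j * (Hr l j - h j)
  = Q - P - P + RR.
Proof.
rewrite -{2}Psym /Q /P /RR -!sumrB -!big_split /=; apply: eq_bigr => r _.
rewrite -!sumrB -!big_split /=; apply: eq_bigr => l _.
rewrite -!sumrB -!big_split /=; apply: eq_bigr => i _.
rewrite -!sumrB -!big_split /=; apply: eq_bigr => j _; ring.
Qed.

Lemma lift_id : BQb Y1 t H = BQb Y (t + sg) (fun r i => Hr r i - h i).
Proof.
rewrite /BQb L2 L3 R2 R3; ring.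
Qed.

End Id.

Lemma sym_Y1 : Defs.symmetric Y1.
Proof.
apply: sym_mkY => r l i j.
case: (unliftP ord_max r) => [r'|] ->; case: (unliftP ord_max l) => [l'|] ->.
- by rewrite !FL_ll; apply: blk_sym.
- by rewrite FL_lm FL_ml.
- by rewrite FL_lm FL_ml.
- rewrite !FL_mm /WW; have -> : TT i j = TT j i.
    rewrite /TT exchange_big /=; apply: eq_bigr => a _; apply: eq_bigr => b _.
    exact: blk_sym.
  lra.
Qed.

Lemma VV_diag r i : VV r i i = 0.
Proof.
rewrite /VV /dg (bigD1 r) //= big1 ?addr0 ?subrr // => l nl.
by apply: od; rewrite eq_sym.
Qed.

Lemma Y1_od i (r l : 'I_k.+1) : r != l -> blk Y1 r l i i = 0.
Proof.
rewrite blk_mkY.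
case: (unliftP ord_max r) => [r'|] ->; case: (unliftP ord_max l) => [l'|] ->.
- by rewrite FL_ll => nrl; apply: od; apply: contra nrl => /eqP ->.
- by rewrite FL_lm VV_diag.
- by rewrite FL_ml VV_diag.
- by rewrite eqxx.
Qed.

Lemma Y1_d1 i : \sum_r blk Y1 r r i i = 1.
Proof.
rewrite sum_recr blk_mkY FL_mm /WW TT_diag.
rewrite (eq_bigr (fun r => dg r i)); first by rewrite -/(Dd i); ring.
by move=> r _; rewrite blk_mkY FL_ll.
Qed.

Lemma Y1_psd : psd (bordered (diagv Y) Y) -> psd (bordered (diagv Y1) Y1).
Proof.
move=> P; apply/(psd_blk sym_Y1) => t H; rewrite lift_id.
exact: ((psd_blk sY).1 P).
Qed.

Lemma Y1_nonneg : nonneg Y -> (forall r i j, 0 <= VV r i j) ->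
  (forall i j, 0 <= WW i j) -> nonneg Y1.
Proof.
move=> nY nV nW a b; rewrite mxE.
case: (unliftP ord_max (pr a).1) => [r'|] ->; case: (unliftP ord_max (pr b).1) => [l'|] ->.
- by rewrite FL_ll; apply: nY.
- by rewrite FL_lm.
- by rewrite FL_ml.
- by rewrite FL_mm.
Qed.

Lemma Y1_obj : obj_P1 Y1 = obj_P2 Y.
Proof.
rewrite /obj_P1 /obj_P2 big_mkcond sum_recr /= ltnn addr0.
apply: eq_bigr => r _.
have -> : (lift ord_max r < k)%N.
  rewrite /= /bump; have h := ltn_ord r; case: leqP => h2; lia.
by apply: eq_bigr => i _; rewrite blk_mkY FL_ll.
Qed.

Lemma Y1_adj (adj : rel 'I_n) : (forall r i j, adj i j -> blk Y r r i j = 0) ->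
  forall (r : 'I_k.+1) i j, (r < k)%N -> adj i j -> blk Y1 r r i j = 0.
Proof.
move=> ha r i j; case: (unliftP ord_max r) => [r'|] -> rk aij.
  by rewrite blk_mkY FL_ll ha.
by move: rk; rewrite /= ltnn.
Qed.

End L.

Lemma qf_ind (R : realType) m (M : 'I_m -> 'I_m -> R) a :
  qf M (fun b => (b == a)%:R) = M a a.
Proof.
rewrite /qf /bf (eq_bigr (fun i => (i == a)%:R * \sum_j M i j * (j == a)%:R)).
  by rewrite sum_ind' sum_ind.
by move=> i _; rewrite mulr_sumr; apply: eq_bigr => j _; rewrite mulrA.
Qed.

Section Q2.
Variables (R : realType) (k n : nat) (adj : rel 'I_n).
Hypothesis k1 : (1 <= k)%N.
Variables Z X : 'M[R]_n.
Hypothesis F : feasible_R1 k adj Z X.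

Lemma R1_P1 : feasible_P1 adj (Y1 (Y2 k Z X)) /\ obj_P1 (Y1 (Y2 k Z X)) = obj_R1 Z.
Proof.
have [sZ [sX [ha [X0 [nZ [nX [PD [PB [ca cb]]]]]]]]] := F.
have [[sY [hadj [od [nY [P _]]]]] ob] := R1_P2 k1 F.
have kk : k%:R * k%:R^-1 = 1 :> R by rewrite mulfV // kn0.
have D1 x : Dd (Y2 k Z X) x = Z x x.
  rewrite /Dd /dg; under eq_bigr do rewrite blk_mkY eqxx.
  by rewrite sum_constk mulrA mulrAC kk mul1r.
have D3 x y r : \sum_(l < k) blk (Y2 k Z X) r l x y = (Z x y + (k%:R - 1) * X x y) / k%:R.
  under eq_bigr do rewrite blk_mkY.
  by rewrite -mulr_suml sum_if.
have T x y : TT (Y2 k Z X) x y = Z x y + (k%:R - 1) * X x y.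
  rewrite /TT (eq_bigr _ (fun r _ => D3 x y r)) sum_constk mulrA mulrAC kk mul1r //.
have Z1 i : Z i i <= 1.
  have sZX : Defs.symmetric (Z + (k%:R - 1) *: X).
    by have := sym_lin 1 (k%:R - 1) sZ sX; rewrite scale1r.
  have := (psd_bord (diagv Z) sZX).1 PB (- Z i i) (fun b => (b == i)%:R).
  rewrite /BQ qf_ind sum_ind mxlinE X0 mulr0 addr0 mxE.
  have := nZ i i; nra.
split; last by rewrite Y1_obj.
split; first exact: sym_Y1.
split; first exact: Y1_adj.
split; first exact: Y1_d1.
split; first exact: Y1_od.
split; last exact: Y1_psd.
apply: Y1_nonneg => //.
  move=> r i j; rewrite /VV D3 /dg blk_mkY eqxx -mulrBl; apply: divr_ge0; last by rewrite ler0n.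
  have [->|nij] := eqVneq i j; first by rewrite X0 mulr0 addr0 subrr.
  by rewrite opprD addrA; apply: cb.
move=> i j; rewrite /WW !D1 T.
case: (ltngtP i j) => [ij|ji|/val_inj ->].
- rewrite (symE sZ) (symE sX); have := ca j i ij; lra.
- have := ca i j ji; lra.
- rewrite X0 mulr0 addr0; have := Z1 j; lra.
Qed.

End Q2.

Section S.
Variables (R : realType) (k n : nat) (adj : rel 'I_n).
Hypothesis sg : simple_graph adj.
Hypothesis k1 : (1 <= k)%N.

Let c : R := (n.+2%:R)^-1.
Definition Zs : 'M[R]_n := \matrix_(i, j) (c * (i == j)%:R).

Lemma c_gt0 : 0 < c.
Proof. by rewrite invr_gt0 ltr0n. Qed.

Lemma qf_diagc (M : 'I_n -> 'I_n -> R) f :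
  (forall i j, M i j = c * (i == j)%:R) -> qf M f = c * \sum_i f i ^+ 2.
Proof.
move=> e; rewrite /qf /bf mulr_sumr; apply: eq_bigr => i _.
rewrite (eq_bigr (fun j => (c * f i) * (f j * (j == i)%:R))).
  by rewrite -mulr_sumr sum_ind; ring.
by move=> j _; rewrite e eq_sym; ring.
Qed.

Lemma sum_sq_gt0 (g : 'I_n -> R) a : g a != 0 -> 0 < \sum_i g i ^+ 2.
Proof.
move=> ga; rewrite (bigD1 a) //=; apply: ltr_pwDl.
  by rewrite lt_def sqrf_eq0 ga sqr_ge0.
by apply: sumr_ge0 => i _; rewrite sqr_ge0.
Qed.

Lemma bord_val (t : R) (g : 'I_n -> R) :
  t * t + 2 * t * (\sum_i diagv Zs i 0 * g i) + qf (Zs + (k%:R - 1) *: (0 : 'M[R]_n)) g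
  = 2 * c * t ^+ 2 + c * \sum_i (g i + t) ^+ 2.
Proof.
rewrite (qf_diagc (M := Zs + (k%:R - 1) *: 0)); last first.
  by move=> i j; rewrite mxlinE !mxE mulr0 addr0.
have cn : c * n%:R = 1 - 2 * c.
  rewrite /c -[n.+2]addn2 natrD; field.
  by rewrite -natrD addn2 pnatr_eq0.
have -> : \sum_i diagv Zs i 0 * g i = c * \sum_i g i.
  by rewrite mulr_sumr; apply: eq_bigr => i _; rewrite !mxE eqxx mulr1.
have -> : \sum_i (g i + t) ^+ 2 = \sum_i g i ^+ 2 + 2 * t * \sum_i g i + n%:R * t ^+ 2.
  rewrite -(sum_constk n (t ^+ 2)) mulr_sumr -!big_split /=; apply: eq_bigr => i _; ring.
have -> : c * (\sum_i g i ^+ 2 + 2 * t * \sum_i g i + n%:R * t ^+ 2) =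
  c * \sum_i g i ^+ 2 + 2 * t * (c * \sum_i g i) + (c * n%:R) * t ^+ 2 by ring.
rewrite cn; ring.
Qed.

Lemma strict : @strictly_feasible_R1 R n k adj.
Proof.
have c0 := c_gt0.
have c2 : c <= 2^-1.
  rewrite /c lef_pV2 ?posrE ?ltr0n //; rewrite -[2]/(2%:R) ler_nat //.
have sZ : Defs.symmetric Zs by apply/matrixP => i j; rewrite !mxE eq_sym.
have s0 : Defs.symmetric (0 : 'M[R]_n) by rewrite /Defs.symmetric trmx0.
have Zd i : Zs i i = c by rewrite mxE eqxx mulr1.
have Zo i j : i != j -> Zs i j = 0 by move=> nij; rewrite mxE (negbTE nij) mulr0.
have sZ0 : Defs.symmetric (Zs - 0) by rewrite subr0.
have sZX : Defs.symmetric (Zs + (k%:R - 1) *: 0).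
  by rewrite scaler0 addr0.
have pd1 : pd (Zs - 0).
  apply: pd_qf => // f [a fa]; rewrite (qf_diagc (M := Zs - 0)).
    by apply: mulr_gt0 => //; apply: (sum_sq_gt0 fa).
  by move=> i j; rewrite mxsubE !mxE subr0.
have pd2 : pd (bordered (diagv Zs) (Zs + (k%:R - 1) *: 0)).
  apply: pd_qf; first exact: sym_bord.
  move=> f [a fa]; rewrite qf_bord bord_val.
  set t := f _.
  have [t0|tn0] := eqVneq t 0.
    move: fa; case: (split_ordP a) => [i ->|i ->].
      by rewrite ord1 -/t t0 eqxx.
    move=> gi; rewrite t0 expr0n /= mulr0 add0r.
    apply: mulr_gt0 => //; apply: (sum_sq_gt0 (a := i)).
    by rewrite addr0.
  have h2 : 0 <= c * \sum_i (f (rshift 1 i) + t) ^+ 2.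
    by apply: mulr_ge0; [exact: ltW | apply: sumr_ge0 => i _; rewrite sqr_ge0].
  have h1 : 0 < 2 * c * t ^+ 2.
    apply: mulr_gt0; first by apply: mulr_gt0.
    by rewrite lt_def sqrf_eq0 tn0 sqr_ge0.
  lra.
exists Zs, 0; split => //.
split; first exact: sZ. split; first exact: s0.
split. move=> i j aij; apply: Zo; apply: contraTneq aij => ->.
  by case: sg => _ /(_ j) /negbTE ->.
split. by move=> i; rewrite mxE.
split. by move=> i j; rewrite mxE; apply: mulr_ge0; [exact: ltW | exact: ler0n].
split. by move=> i j; rewrite mxE.
split.
  apply/psd_qf; split => // f; rewrite (qf_diagc (M := Zs - 0)).
    by apply: mulr_ge0; [exact: ltW | apply: sumr_ge0 => i _; rewrite sqr_ge0].
  by move=> i j; rewrite mxsubE !mxE subr0.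
split.
  apply/(psd_bord _ sZX) => t g; rewrite /BQ bord_val.
  have h2 : 0 <= c * \sum_i (g i + t) ^+ 2.
    by apply: mulr_ge0; [exact: ltW | apply: sumr_ge0 => i _; rewrite sqr_ge0].
  have h1 : 0 <= 2 * c * t ^+ 2.
    by apply: mulr_ge0; [apply: mulr_ge0; [by [] | exact: ltW] | rewrite sqr_ge0].
  lra.
split.
  move=> i j ji; rewrite !Zd Zo; last by apply: contraTneq ji => ->; rewrite ltnn.
  rewrite mxE mulr0 addr0; lra.
move=> i j nij; rewrite Zd Zo // mxE mulr0 subr0 subr0; exact: ltW.
Qed.

End S.

Unset Implicit Arguments.
Set Strict Implicit.

Theorem theorem3 (R : realType) (n k : nat) (adj : rel 'I_n) :
  simple_graph adj -> (1 <= k)%N ->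
  [/\ (* P1 -> P2, P1 -> R1 *)
      (forall Y : 'M[R]_(k.+1 * n), feasible_P1 adj Y ->
         (exists Y' : 'M[R]_(k * n), feasible_P2 adj Y' /\ obj_P2 Y' = obj_P1 Y) /\
         (exists Z X : 'M[R]_n, feasible_R1 k adj Z X /\ obj_R1 Z = obj_P1 Y)),
      (* P2 -> P1, P2 -> R1 *)
      (forall Y : 'M[R]_(k * n), feasible_P2 adj Y ->
         (exists Y' : 'M[R]_(k.+1 * n), feasible_P1 adj Y' /\ obj_P1 Y' = obj_P2 Y) /\
         (exists Z X : 'M[R]_n, feasible_R1 k adj Z X /\ obj_R1 Z = obj_P2 Y)),
      (* R1 -> P1, R1 -> P2 *)
      (forall Z X : 'M[R]_n, feasible_R1 k adj Z X ->
         (exists Y : 'M[R]_(k.+1 * n), feasible_P1 adj Y /\ obj_P1 Y = obj_R1 Z) /\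
         (exists Y : 'M[R]_(k * n), feasible_P2 adj Y /\ obj_P2 Y = obj_R1 Z)) &
      (* (R1) is strictly feasible *)
      @strictly_feasible_R1 R n k adj].
Proof.
move=> sg k1; split.
- move=> Y FY.
  have [W o1] := P1_WP2 k1 FY.
  have [FR o2] := WP2_R1 k1 W.
  have [F2 o3] := R1_P2 k1 FR.
  split; first by exists (Y2 k (Zof (trunc Y)) (Xof (trunc Y))); split => //; rewrite o3 o2.
  by exists (Zof (trunc Y)), (Xof (trunc Y)); split => //; rewrite o2.
- move=> Y FY.
  have [FR o2] := WP2_R1 k1 (P2_WP2 FY).
  have [F1 o3] := R1_P1 k1 FR.
  split; first by exists (Y1 (Y2 k (Zof Y) (Xof Y))); split => //; rewrite o3.
  by exists (Zof Y), (Xof Y).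
- move=> Z X FR; split.
    have [F1 o] := R1_P1 k1 FR; by exists (Y1 (Y2 k Z X)).
  have [F2 o] := R1_P2 k1 FR; by exists (Y2 k Z X).
- exact: strict.
Qed.
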